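(* A Toeplitz graph is regular if and only if it is a circulant graph. More precisely, for a Toeplitz graph $G=G_n\langle t_1,\ldots,t_k\rangle$: if $G$ is regular then its adjacency matrix (vertices ordered $1,\ldots,n$) is a circulant matrix; and if $G$ is isomorphic to a circulant graph then $G$ is regular.
   Context: For integers $n\ge 2$, $k\ge 1$ and $1\le t_1<t_2<\cdots<t_k\le n-1$, the Toeplitz graph $G_n\langle t_1,\ldots,t_k\rangle$ is the simple graph with vertex set $[n]=\{1,\ldots,n\}$ in which two distinct vertices $i,j$ are adjacent if and only if $|i-j|\in\{t_1,\ldots,t_k\}$. An $n\times n$ matrix $(a_{ij})$ is circulant if $a_{ij}$ depends only on $(i-j)\bmod n$. A circulant graph is a graph isomorphic to a graph whose adjacency matrix is a symmetric $(0,1)$ circulant matrix with zero diagonal. A graph is regular if all vertices have the same degree. *)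

(* Defs.v *)
From mathcomp Require Import all_boot all_algebra.
Set Implicit Arguments. Unset Strict Implicit. Unset Printing Implicit Defensive.

(* Vertices 1..n of the paper are represented by 'I_n = {0,..,n-1}
   (shift by one; differences |i-j| are unchanged). *)

Definition absdiff (i j : nat) : nat := maxn i j - minn i j.

Definition toeplitz (n : nat) (ts : seq nat) : rel 'I_n :=
  fun i j => (i != j) && (absdiff i j \in ts).

Definition deg (T : finType) (e : rel T) (x : T) : nat := #|[pred y | e x y]|.
Definition regular (T : finType) (e : rel T) : Prop :=
  exists d, forall x, deg e x = d.

Definition adj_mx (n : nat) (e : rel 'I_n) : 'M[nat]_n :=
  \matrix_(i, j) (e i j : nat).

Definition circulant_mx (R : Type) (n : nat) (A : 'M[R]_n) : Prop :=
  forall i j i' j' : 'I_n,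
    (i + n - j) %% n = (i' + n - j') %% n -> A i j = A i' j'.

Definition circulant_graph (T : finType) (e : rel T) : Prop :=
  exists (m : nat) (C : 'M[nat]_m) (f : T -> 'I_m),
    bijective f /\
    (forall i j, C i j = C j i) /\
    (forall i j, C i j = 0 \/ C i j = 1) /\
    (forall i, C i i = 0) /\
    circulant_mx C /\
    (forall x y, e x y = (C (f x) (f y) == 1)).
Arguments toeplitz : clear implicits.

(* Main.v *)
Require Import Defs.
From mathcomp Require Import all_boot all_algebra.
From mathcomp Require Import zify.

Section Aux.
Variable (n : nat) (ts : seq nat).

Definition P (d : nat) : nat := (d \in ts).
Definition Tsum (x : nat) : nat := \sum_(0 <= d < x) P d.+1.

Lemma deg_formula (i : 'I_n) :
  deg (toeplitz n ts) i = Tsum i + Tsum (n - i.+1).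
Proof.
rewrite /deg -sum1_card big_mkcond /=.
have -> : \sum_(y : 'I_n) (if (toeplitz n ts i y) then 1 else 0)
   = \sum_(0 <= y < n) ((i != y :> nat) && (absdiff i y \in ts) : nat).
  rewrite big_mkord; apply: eq_bigr => y _.
  by rewrite /toeplitz; case: ifP.
have hi := ltn_ord i.
rewrite (big_cat_nat _ (n:=i)) //=; last by lia.
rewrite [X in _ + X]big_ltn // eqxx /= add0n.
congr (_ + _).
  rewrite big_nat_rev /Tsum; apply: eq_big_nat => y /andP[_ hy].
  have -> : absdiff i (0 + i - y.+1) = y.+1 by rewrite /absdiff; lia.
  have -> : (i != 0 + i - y.+1 :> nat) = true by apply/eqP; lia.
  by [].
rewrite -{1}(add0n i.+1) big_addn /Tsum; apply: eq_big_nat => y /andP[_ hy].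
have -> : absdiff i (y + i.+1) = y.+1 by rewrite /absdiff; lia.
have -> : (i != y + i.+1 :> nat) = true by apply/eqP; lia.
by [].
Qed.

Lemma sym_ts (H : regular (toeplitz n ts)) s :
  0 < s < n -> (s \in ts) = (n - s \in ts).
Proof.
move=> /andP[s0 sn]; case: H => d Hd.
have h1 : s.-1 < n by lia.
have h2 : s < n by [].
have := Hd (Ordinal h1); have := Hd (Ordinal h2).
rewrite !deg_formula /= => e2 e1.
move: e1; rewrite -e2 => e.
have E1 : s = s.-1.+1 by lia.
have E2 : n - s.-1.+1 = (n - s.+1).+1 by lia.
move: e; rewrite E2 /Tsum.
have A : \sum_(0 <= d0 < s) P d0.+1 = \sum_(0 <= d0 < s.-1) P d0.+1 + P s.
  by rewrite {1}E1 big_nat_recr //= -E1.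
rewrite A big_nat_recr //=.
have -> : (n - s.+1).+1 = n - s by lia.
rewrite /P.
case: (s \in ts); case: (n - s \in ts) => /=; lia.
Qed.
End Aux.

Theorem theorem4p6 (n : nat) (ts : seq nat) :
  2 <= n -> 0 < size ts -> sorted ltn ts ->
  all (fun t => 0 < t < n) ts ->
  (regular (toeplitz n ts) -> circulant_mx (adj_mx (toeplitz n ts))) /\
  (circulant_graph (toeplitz n ts) -> regular (toeplitz n ts)).
Proof.
move=> n2 _ _ hall; split.
  move=> Hreg.
  have key : forall i j : 'I_n,
    ((toeplitz n ts i j) : nat) =
    (((i + n - j) %% n != 0) && ((i + n - j) %% n \in ts) : nat).
    move=> i j; have hi := ltn_ord i; have hj := ltn_ord j.
    rewrite /toeplitz.
    case: (ltngtP i j) => hij.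
    - have -> : (i + n - j) %% n = n - (j - i) by rewrite modn_small; lia.
      have -> : (i != j) = true by apply/eqP => /(congr1 val) /=; lia.
      have -> : absdiff i j = j - i by rewrite /absdiff; lia.
      rewrite (@sym_ts n ts Hreg (j - i)); last by lia.
      have -> : (n - (j - i) != 0) = true by lia.
      by [].
    - have -> : i + n - j = (i - j) + n by lia.
      rewrite modnDr modn_small; last by lia.
      have -> : (i != j) = true by apply/eqP => /(congr1 val) /=; lia.
      have -> : absdiff i j = i - j by rewrite /absdiff; lia.
      have -> : (i - j != 0) = true by lia.
      by [].
    - have -> : i = j by apply: val_inj.
      by rewrite eqxx addKn modnn.
  move=> i j i' j' e.
  by rewrite /adj_mx !mxE !key e.
case=> m [C [f [fbij [_ [_ [_ [circ he]]]]]]].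
have x0 : 'I_n by exists 0; lia.
exists (deg (toeplitz n ts) x0) => x.
have rowE : forall y : 'I_n, deg (toeplitz n ts) y =
    \sum_(z : 'I_m) ((C (f y) z == 1) : nat).
  move=> y; rewrite /deg -sum1_card big_mkcond /=.
  rewrite (reindex f (onW_bij _ fbij)) /=.
  by apply: eq_bigr => z _; rewrite inE he; case: (_ == 1).
rewrite !rowE; clear rowE.
move: (f x) (f x0) circ; case: m C f fbij he => [|m] C f fbij he a; first by case: a.
move=> b circ.
have Hv : forall u v : 'I_m.+1, (u + m.+1 - v) %% m.+1 = val (u - v)%R.
  move=> u v /=.
  rewrite modnDmr addnBA //; exact: ltnW (ltn_ord v).
rewrite (reindex (fun z : 'I_m.+1 => z - (b - a))%R); last first.
  exists (fun z : 'I_m.+1 => z + (b - a))%R => z _; [exact: GRing.addrNK | exact: GRing.addrK].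
apply: eq_bigr => z _.
suff -> : C a (z - (b - a))%R = C b z by [].
apply: circ; rewrite !Hv; congr val.
by rewrite GRing.opprB GRing.addrA GRing.subrKC.
Qed.
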